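(* Let $G$ be a finite group with identity $e$ and $H$ a normal subgroup of $G$ with $|H|=3$. Then the following two conditions are equivalent: (a) for every $x\in G\setminus H$, one has $x^2\in H$ and the coset $Hx$ contains an element of order at least $3$; (b) there exist $n\ge 0$ and an isomorphism $G\cong\mathbb{Z}_2^n\times\mathbb{Z}_3$ mapping $H$ onto the subgroup $\{(0,\dots,0,0),(0,\dots,0,1),(0,\dots,0,2)\}=\{0\}^n\times\mathbb{Z}_3$. *)

(* Defs.v *)
From mathcomp Require Import all_boot all_order all_algebra all_fingroup.
Set Implicit Arguments. Unset Strict Implicit. Unset Printing Implicit Defensive.

(* The group Z_2^n x Z_3, as the additive group of the finite Z-module
   'rV['Z_2]_n * 'Z_3 (group law = componentwise addition). *)
Definition Z2nZ3 (n : nat) : finGroupType := ('rV['Z_2]_n * 'Z_3)%type.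

Definition zero_Z3 (n : nat) : {set Z2nZ3 n} := [set u : Z2nZ3 n | u.1 == 0%R].

(* Main.v *)
Require Import Defs.
From mathcomp Require Import all_boot all_order all_algebra all_fingroup all_solvable.
Set Implicit Arguments. Unset Strict Implicit. Unset Printing Implicit Defensive.
Local Open Scope group_scope.
Import GRing.Theory FinRing.Theory.

Lemma Z2_dbl (x : 'Z_2) : (x + x = 0)%R.
Proof. by apply/val_inj; case: x => [[|[|//]] ?]. Qed.

Lemma rV_dbl n (a : 'rV['Z_2]_n) : (a + a = 0)%R.
Proof. by apply/rowP => i; rewrite !mxE Z2_dbl. Qed.

Lemma Z2nZ3_sq1 n (u : Z2nZ3 n) : (u ^+ 2).1 = 0%R.
Proof. by rewrite expgS expg1 /= zmodMgE rV_dbl. Qed.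

Lemma Z2nZ3_cube1 n (u : Z2nZ3 n) : (u ^+ 3).1 = u.1.
Proof. by rewrite !expgS expg0 mulg1 /= !zmodMgE addrA rV_dbl add0r. Qed.

Lemma Z2nZ3_ord3 n (w : Z2nZ3 n) : w.2 = 1%R -> 3 <= #[w].
Proof.
move=> w2; rewrite leqNgt; apply/negP => lt.
have : w ^+ 2 == 1.
  rewrite -order_dvdn; move: (order_gt0 w) lt; case: #[w] => [|[|[|]]] //.
move/eqP => /(congr1 snd); rewrite expgS expg1 /= zmodMgE w2.
by [].
Qed.

Lemma card_zero_Z3 n : #|zero_Z3 n| = 3.
Proof.
have -> : zero_Z3 n = setX [set 0%R] [set: 'Z_3].
  by apply/setP => -[a b]; rewrite !inE andbT.
by rewrite cardsX cards1 cardsT card_ord.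
Qed.

Lemma card_rV n : #|[set: 'rV['Z_2]_n]| = (2 ^ n)%N.
Proof. by rewrite cardsT card_mx card_ord mul1n. Qed.

Lemma rV_abelem n : 2.-abelem [set: 'rV['Z_2]_n].
Proof.
apply: exponent2_abelem; apply/exponentP => u _.
by rewrite zmodXgE mulr2n rV_dbl.
Qed.

Theorem lemma5p1 (gT : finGroupType) (G H : {group gT})
  (nHG : H <| G) (cardH : #|H| = 3) :
  (forall x, x \in G :\: H ->
     x ^+ 2 \in H /\ exists2 y, y \in H :* x & 3 <= #[y])
  <->
  (exists n : nat, exists f : {morphism G >-> Z2nZ3 n},
     isom G [set: Z2nZ3 n] f /\ f @* H = zero_Z3 n).
Proof.
have sHG : H \subset G := normal_sub nHG.
split; last first.
  move=> [n [f [/isomP [injf imf] fH]]] x /setDP [xG xH'].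
  have memH : forall z, z \in G -> (z \in H) = (f z \in zero_Z3 n).
    move=> z zG; rewrite -fH; apply/idP/idP => [zH|fz]; first exact: mem_morphim.
    by rewrite -(injmK injf sHG); apply: mem_morphpre.
  split; first by rewrite memH ?groupX // morphX // inE Z2nZ3_sq1.
  have vH : ((0%R, (1 - (f x).2)%R) : Z2nZ3 n) \in f @* H by rewrite fH inE.
  case/morphimP: vH => h hG hH fh.
  exists (h * x); first by rewrite mem_rcoset mulgK.
  rewrite -(order_injm injf) ?groupM // morphM // -fh.
  by apply: Z2nZ3_ord3; rewrite /= zmodMgE subrK.
move=> hyp.
have prH : prime #|H| by rewrite cardH.
have cHH : abelian H := cyclic_abelian (prime_cyclic prH).
have sq : forall x, x \in G -> x ^+ 2 \in H.
  move=> x xG; case: (boolP (x \in H)) => xH; first exact: groupX.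
  by case: (hyp x) => //; rewrite inE xH xG.
have cGH : G \subset 'C(H).
  apply/subsetP => x xG; case: (boolP (x \in H)) => xH.
    exact: (subsetP cHH).
  have xGH : x \in G :\: H by rewrite inE xH xG.
  have [_ [y]] := hyp x xGH.
  case/rcosetP => h hH -> oy.
  have yG : h * x \in G by rewrite groupM // (subsetP sHG).
  set z := (h * x) ^+ 2.
  have zH : z \in H := sq _ yG.
  have z1 : z != 1.
    apply/negP => /eqP z1; move: oy; rewrite leqNgt; apply/negP; apply/negPn.
    have : #[h * x] %| 2 by rewrite order_dvdn -/z z1.
    by move/dvdn_leq => /(_ isT).
  have Hz : (H : {set gT}) = <[z]>.
    apply/eqP; rewrite eq_sym eqEcard cycle_subG zH cardH /= -orderE.
    have : #[z] %| 3 by rewrite -cardH order_dvdG.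
    have : #[z] != 1%N by rewrite order_eq1.
    by case: #[z] => [|[|[|[|]]]].
  rewrite Hz cent_cycle; apply/cent1P.
  rewrite -[x](mulKg h); apply: commute_sym; apply: commuteM.
    have : h^-1 \in 'C(H) by apply: (subsetP cHH); rewrite groupV.
    by move/centP => /(_ z zH).
  exact: commute_sym (commuteX 2 (commute_refl _)).
have nHG' : G \subset 'N(H) := normal_norm nHG.
have cop : coprime #|H| #|G : H|.
  rewrite cardH -card_quotient // prime_coprime //.
  apply/negP => /(Cauchy (isT : prime 3)) [X XGH oX].
  case/morphimP: XGH => x xN xG eX.
  have : X ^+ 2 == 1 by rewrite eX -morphX //; apply/eqP; apply: coset_id; apply: sq.
  by rewrite -order_dvdn oX.
have hall : Hall G H by rewrite /Hall sHG cop.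
case/splitsP: (SchurZassenhaus_split hall nHG) => K /complP [tiHK defG].
have sKG : K \subset G by rewrite -defG mulG_subr.
have defKH : K \x H = G.
  rewrite dprodE ?(setIC K) //.
    by rewrite -defG; apply/esym/centC; rewrite centsC (subset_trans sKG).
  by rewrite centsC (subset_trans sKG).
have abK : 2.-abelem K.
  apply: exponent2_abelem; apply/exponentP => k kK.
  have : k ^+ 2 \in H :&: K by rewrite inE sq ?(subsetP sKG) // groupX.
  by rewrite tiHK => /set1P.
set n := logn 2 #|K|.
have isoK : K \isog [set: 'rV['Z_2]_n].
  rewrite (isog_abelem_card _ abK) rV_abelem card_rV /n.
  by rewrite /= eq_sym; apply/eqP; apply: card_pgroup; apply: abelem_pgroup abK.

have isoH : H \isog [set: 'Z_3].
  rewrite (isog_cyclic_card _ (prime_cyclic prH)) cardsT card_ord cardH eqxx andbT.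
  by apply: prime_cyclic; rewrite cardsT card_ord.
have isoG : G \isog [set: Z2nZ3 n].
  have -> : [set: Z2nZ3 n] = setX [set: 'rV['Z_2]_n] [set: 'Z_3].
    by apply/setP => -[a b]; rewrite !inE.
  apply: (isog_dprod defKH (setX_dprod _ _)).
    exact: isog_trans isoK (isog_setX1 _ _).
  exact: isog_trans isoH (isog_set1X _ _).
case/isogP: isoG => f injf imf.
exists n, f; split; first by apply/isomP.
apply/eqP; rewrite eqEcard card_zero_Z3 (card_injm injf sHG) cardH leqnn andbT.
apply/subsetP => u /morphimP [h hG hH ->].
have h3 : h ^+ 3 = 1 by rewrite -cardH expg_cardG.
rewrite inE -Z2nZ3_cube1 -morphX // h3 morph1.
by [].
Qed.
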